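(* Let $F(\Sigma)$ be a free group with $\Sigma=A\sqcup B$, and let $b\in\langle B\rangle$ and $z\in F(\Sigma)$ be freely reduced words. Suppose that $z$ begins and ends with letters in $A\sqcup A^{-1}$, that $zb$ is not a proper power, and that there are $i\in\mathbb{Z}$ and $g,h\in F(\Sigma)$ such that $(zb)^i=gzh$ with the word $g\cdot z\cdot h$ freely reduced. Then $i\geq 1$ and $g\in\langle zb\rangle$.
   Context: $F(\Sigma)$ is the free group on $\Sigma$. An element $w$ is a proper power if $w=u^n$ for some $u$ and $n\geq 2$. *)

(* Defs.v *)
(* Free group F(Sigma) on Sigma = A ⊔ B, modelled as
   freely reduced words over letters Sigma × {+1,-1}. *)
From mathcomp Require Import all_boot all_order all_algebra.
Set Implicit Arguments. Unset Strict Implicit. Unset Printing Implicit Defensive.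

Section FreeGroup.
Variables A B : eqType.

Definition Sigma : eqType := (A + B)%type.
(* a letter: a generator together with a sign (true = inverse) *)
Definition letter : eqType := (Sigma * bool)%type.
Definition word := seq letter.

Definition inv_letter (x : letter) : letter := (x.1, ~~ x.2).

Fixpoint reduced (w : word) : bool :=
  match w with
  | x :: ((y :: _) as w') => (y != inv_letter x) && reduced w'
  | _ => true
  end.

Definition cons_red (x : letter) (w : word) : word :=
  match w with
  | y :: w' => if y == inv_letter x then w' else x :: w
  | [::] => [:: x]
  end.
Definition reduce (w : word) : word := foldr cons_red [::] w.

Definition fmul (u v : word) : word := reduce (u ++ v).
Definition finv (u : word) : word := rev (map inv_letter u).
Definition fone : word := [::].

Definition fpow (u : word) (i : int) : word :=
  match i with
  | Posz n => iter n (fmul u) fone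
  | Negz n => iter n.+1 (fmul (finv u)) fone
  end.

Definition isA (x : letter) : bool := if x.1 is inl _ then true else false.
Definition isB (x : letter) : bool := if x.1 is inr _ then true else false.

Definition in_gen_B (w : word) : Prop :=
  exists u : word, all isB u /\ reduce u = w.

Definition in_cyclic (u w : word) : Prop := exists j : int, w = fpow u j.

Definition proper_power (w : word) : Prop :=
  exists (u : word) (n : nat), reduced u /\ (2 <= n)%N /\ w = fpow u (Posz n).

Definition begins_in_A (w : word) : bool := if w is x :: _ then isA x else false.
Definition ends_in_A (w : word) : bool := if rev w is x :: _ then isA x else false.

End FreeGroup.

(* Main.v *)
Require Import Defs.
From mathcomp Require Import all_boot all_order all_algebra.
From mathcomp Require Import zify.
Set Implicit Arguments. Unset Strict Implicit. Unset Printing Implicit Defensive.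


Section FG.
Variables A B : eqType.
Local Notation letter := (letter A B).
Local Notation word := (word A B).
Local Notation inv := (@inv_letter A B).
Local Notation cons_red := (@cons_red A B).
Local Notation fone := (@fone A B).
Local Notation finv := (@Defs.finv A B).

Lemma invK (x : letter) : inv (inv x) = x.
Proof. by case: x => a s; rewrite /inv_letter /= negbK. Qed.

Lemma linv_inj : injective inv.
Proof. exact: (can_inj invK). Qed.

Lemma inv_neq (x : letter) : inv x != x.
Proof. by case: x => a s; rewrite /inv_letter /= xpair_eqE eqxx /=; case: s. Qed.

Lemma isA_inv (x : letter) : isA (inv x) = isA x.
Proof. by []. Qed.
Lemma isB_inv (x : letter) : isB (inv x) = isB x.
Proof. by []. Qed.
Lemma isA_isB (x : letter) : isA x = ~~ isB x.
Proof. by case: x => [[]]. Qed.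

Definition jn (s t : word) : bool :=
  match s, t with
  | x :: s', y :: _ => y != inv (last x s')
  | _, _ => true
  end.

Lemma reduced_cons x (r : word) : reduced (x :: r) = jn [:: x] r && reduced r.
Proof. by case: r. Qed.

Lemma jn_cons x s (t : word) : jn (x :: s) t = jn (last x s :: [::]) t.
Proof. by case: t. Qed.

Lemma reduced_cat (s t : word) :
  reduced (s ++ t) = [&& reduced s, reduced t & jn s t].
Proof.
elim: s => [|x s IH]; first by case: t => //= y t; rewrite andbT.
rewrite cat_cons reduced_cons IH reduced_cons.
case: s IH => [|y s] IH.
  rewrite /=; case: t IH => [|u t] IH //=.
  by rewrite andbT andbC.
have -> : jn [:: x] ((y :: s) ++ t) = jn [:: x] (y :: s) by [].
have -> : jn (x :: y :: s) t = jn (y :: s) t by [].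
by rewrite !andbA.
Qed.

Lemma jn_catr (s y t : word) : y != [::] -> jn s (y ++ t) = jn s y.
Proof. by case: s => // x s; case: y. Qed.

Lemma jn_catl (s y t : word) : y != [::] -> jn (s ++ y) t = jn y t.
Proof.
case: y => // y0 y _; case: s => // x s; case: t => // u t.
by rewrite /= last_cat.
Qed.

Lemma reduced_catl (s t : word) : reduced (s ++ t) -> reduced s.
Proof. by rewrite reduced_cat => /and3P []. Qed.
Lemma reduced_catr (s t : word) : reduced (s ++ t) -> reduced t.
Proof. by rewrite reduced_cat => /and3P []. Qed.

Lemma foldr_red (s t : word) : reduced (s ++ t) -> foldr cons_red t s = s ++ t.
Proof.
elim: s => [|x s IH] // H.
rewrite /= IH; last by move: H; rewrite cat_cons reduced_cons => /andP [].
move: H; rewrite cat_cons reduced_cons => /andP [H _].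
case: s H {IH} => [|y s] /=.
  by case: t => //= u t; rewrite /cons_red => /negbTE ->.
by rewrite /cons_red => /negbTE ->.
Qed.

Lemma reduce_id (w : word) : reduced w -> reduce w = w.
Proof. by move=> H; rewrite /reduce foldr_red ?cats0. Qed.

Lemma finv_cons x (s : word) : finv (x :: s) = finv s ++ [:: inv x].
Proof. by rewrite /finv /= rev_cons cats1. Qed.

Lemma finv_cat (s t : word) : finv (s ++ t) = finv t ++ finv s.
Proof. by rewrite /finv map_cat rev_cat. Qed.

Lemma finvK (s : word) : finv (finv s) = s.
Proof.
rewrite /finv map_rev revK -map_comp.
by rewrite (eq_map (g := id)) ?map_id // => x /=; rewrite invK.
Qed.

Lemma size_finv (s : word) : size (finv s) = size s.
Proof. by rewrite /finv size_rev size_map. Qed.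

Lemma finv_nil (s : word) : (finv s == [::]) = (s == [::]).
Proof. by rewrite -!size_eq0 size_finv. Qed.

Lemma cancel_red (u t : word) : foldr cons_red (u ++ t) (finv u) = t.
Proof.
elim: u t => [|x u IH] t //=.
rewrite finv_cons foldr_cat /= /cons_red invK eqxx.
exact: IH.
Qed.

Lemma reduced_finv (s : word) : reduced (finv s) = reduced s.
Proof.
elim: s => [|x s IH] //.
rewrite finv_cons reduced_cat IH /=.
case: s IH => [|y s] IH //.
rewrite finv_cons jn_catl // /= invK eq_sym.
by rewrite andbC.
Qed.

Lemma nth_finv x0 (s : word) t : t < size s ->
  nth x0 (finv s) t = inv (nth x0 s (size s - t.+1)).
Proof.
move=> Ht; rewrite /finv nth_rev ?size_map // (nth_map x0) ?size_map //; lia.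
Qed.

Definition ycat n (y : word) : word := flatten (nseq n y).

Lemma ycatS n y : ycat n.+1 y = y ++ ycat n y.
Proof. by []. Qed.

Lemma ycat_add m n y : ycat (m + n) y = ycat m y ++ ycat n y.
Proof. by elim: m => //= m IH; rewrite !ycatS IH catA. Qed.

Lemma size_ycat n y : size (ycat n y) = n * size y.
Proof. by elim: n => //= n IH; rewrite ycatS size_cat IH mulSn. Qed.

Lemma nth_ycat x0 n y t : t < n * size y ->
  nth x0 (ycat n y) t = nth x0 y (t %% size y).
Proof.
elim: n t => [|n IH] t; first by rewrite mul0n.
move=> Ht; rewrite ycatS nth_cat.
case: ltnP => H; first by rewrite modn_small.
rewrite IH; last by rewrite mulSn in Ht; lia.
by rewrite -(modnDr (t - size y)) subnK.
Qed.

Lemma reduced_ycat n (y t : word) : y != [::] -> reduced (y ++ y) ->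
  reduced (y ++ t) -> reduced (ycat n.+1 y ++ t).
Proof.
move=> Hy Hyy Hyt; elim: n => [|n IH]; first by rewrite /ycat /= cats0.
rewrite ycatS -catA reduced_cat IH (reduced_catl Hyy) /=.
rewrite ycatS -catA jn_catr //.
by move: Hyy; rewrite reduced_cat => /and3P [].
Qed.

Lemma fpow_conj (u y : word) n : y != [::] ->
  reduced (u ++ y ++ finv u) -> reduced (y ++ y) ->
  iter n.+1 (fmul (u ++ y ++ finv u)) fone = u ++ ycat n.+1 y ++ finv u.
Proof.
move=> Hy Hw Hyy.
have Hyu : reduced (y ++ finv u) by exact: reduced_catr Hw.
have key : forall m, reduced (u ++ ycat m.+1 y ++ finv u).
  move=> m; rewrite reduced_cat reduced_ycat // (reduced_catl Hw) /=.
  rewrite ycatS -catA jn_catr //.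
  by move: Hw; rewrite reduced_cat jn_catr // => /and3P [].
elim: n => [|n IH].
  by rewrite /= /fmul cats0 reduce_id // /ycat /= cats0.
rewrite iterS IH /fmul /reduce foldr_cat.
rewrite (foldr_red (s := u ++ ycat n.+1 y ++ finv u) (t := [::])) ?cats0 ?key //.
rewrite foldr_cat foldr_cat cancel_red.
have K2 := key n.+1; rewrite ycatS in K2.
rewrite -catA in K2.
rewrite (foldr_red (s := y)); last exact: (reduced_catr K2).
rewrite foldr_red //; by rewrite (ycatS n.+1) -catA.
Qed.

End FG.


Lemma count_shift p L (s : nat -> nat) (a : nat -> bool) :
  L <= p ->
  (forall r, r < p -> s r < p) ->
  (forall r1 r2, r1 < p -> r2 < p -> s r1 = s r2 -> r1 = r2) ->
  (forall r, r < p -> a r -> r < L) ->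
  (forall r, r < L -> a (s r) = a r) ->
  forall r, r < p -> a (s r) = a r.
Proof.
move=> Lp sp sinj aL hL.
have U : uniq (map s (iota 0 p)).
  rewrite map_inj_in_uniq ?iota_uniq //.
  move=> r1 r2; rewrite !mem_iota /= => H1 H2; exact: sinj.
have S : {subset map s (iota 0 p) <= iota 0 p}.
  by move=> x /mapP [r]; rewrite !mem_iota /= => Hr ->; apply: sp.
have [_ E] := uniq_min_size U S (eq_leq (esym (size_map s (iota 0 p)))).
have P : perm_eq (map s (iota 0 p)) (iota 0 p).
  by apply: uniq_perm => //; exact: iota_uniq.
have C := permP P a.
rewrite count_map -(subnKC Lp) iotaD !count_cat /= add0n in C.
have C1 : count (preim s a) (iota 0 L) = count a (iota 0 L).
  by apply: eq_in_count => r; rewrite mem_iota /= => Hr; apply: hL.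
have C2 : count a (iota L (p - L)) = 0.
  apply/eqP; rewrite -leqn0 leqNgt -has_count; apply/hasPn => r.
  rewrite mem_iota => /andP [H1 H2]; apply/negP => /aL; rewrite subnKC // in H2.
  by move=> /(_ H2); rewrite ltnNge H1.
rewrite C1 C2 addn0 in C.
have C3 : count (preim s a) (iota L (p - L)) = 0 by lia.
move=> r Hr; case: (ltnP r L) => HrL; first exact: hL.
have -> : a r = false by apply/negP => /(aL _ Hr); rewrite ltnNge HrL.
apply/negP => Ha.
have : has (preim s a) (iota L (p - L)).
  by apply/hasP; exists r => //; rewrite mem_iota; lia.
by rewrite has_count C3.
Qed.

Lemma cycle_const (T : Type) (c : nat -> T) (bad : nat -> bool) N :
  (forall j, j < N -> ~~ bad j -> c j.+1 = c j) ->
  (forall j1 j2, j1 < N -> j2 < N -> bad j1 -> bad j2 -> j1 = j2) ->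
  c N = c 0 -> forall j, j <= N -> c j = c 0.
Proof.
move=> edge uniqb cN.
case: (boolP (has bad (iota 0 N))) => [/hasP [j0 Hj0 Bj0] | /hasPn Hn].
  rewrite mem_iota /= in Hj0.
  have L1 : forall j, j <= j0 -> c j = c 0.
    elim=> // j IH Hj; rewrite edge; first by apply: IH; lia.
      by lia.
    by apply/negP => Bj; have := uniqb _ _ (_ : j < N) Hj0 Bj Bj0; lia.
  have L2 : forall m j, j0 < j -> j + m = N -> c j = c N.
    elim=> [|m IH] j Hj E; first by rewrite -E addn0.
    rewrite -(edge j); first by apply: IH; lia.
      by lia.
    by apply/negP => Bj; have := uniqb _ _ (_ : j < N) Hj0 Bj Bj0; lia.
  move=> j Hj; case: (leqP j j0) => H; first exact: L1.
  by rewrite (L2 (N - j)) //; lia.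
elim=> // j IH Hj; rewrite edge; first by apply: IH; lia.
  by lia.
by apply: Hn; rewrite mem_iota; lia.
Qed.

Lemma mod_close m n g : m %% g = n %% g -> m < n + g -> n < m + g -> m = n.
Proof.
wlog mn : m n / m <= n.
  move=> W E H1 H2; case: (leqP m n) => H; first exact: W.
  by apply/esym/W => //; lia.
move=> E H1 H2.
have : g %| n - m by rewrite -eqn_mod_dvd // E.
case: (posnP (n - m)) => [|P D]; first by lia.
by have := dvdn_leq P D; lia.
Qed.

Lemma pos_core (T : Type) (P : T -> bool) (f : nat -> T) p L K :
  0 < L -> L <= p -> 0 < K -> K < p ->
  (forall t, f t = f (t %% p)) ->
  P (f 0) ->
  (forall r, L <= r -> r < p -> ~~ P (f r)) ->
  (forall j, j < L -> f (j + K) = f j) ->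
  exists2 g, 0 < g < p & (g %| p) /\ (forall x, f (x + g) = f x).
Proof.
move=> L0 Lp K0 Kp fper PA PB hrel.
have p0 : 0 < p by lia.
have fp : forall t c, f (t + c * p) = f t.
  by move=> t c; rewrite fper (fper t) addnC modnMDl.
have edge : forall t, t %% p < L -> f (t + K) = f t.
  by move=> t Ht; rewrite fper -modnDml -fper hrel // -fper.
have Ainv : forall r, r < p -> P (f ((r + K) %% p)) = P (f r).
  apply: (count_shift (L := L) (s := fun r => (r + K) %% p) (a := fun r => P (f r))) => //.
  - by move=> r _; rewrite ltn_pmod.
  - move=> r1 r2 H1 H2 E.
    have : (r1 + K == r2 + K %[mod p]) by apply/eqP.
    by rewrite eqn_modDr !modn_small // => /eqP.
  - by move=> r Hr Ha; rewrite ltnNge; apply/negP => H; move: (PB r H Hr); rewrite Ha.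
  - by move=> r Hr; rewrite -fper hrel.
have Ainv' : forall t, P (f (t + K)) = P (f t).
  by move=> t; rewrite fper -modnDml Ainv ?ltn_pmod // -fper.
have AinvM : forall a t, P (f (t + a * K)) = P (f t).
  elim=> [|a IH] t; first by rewrite mul0n addn0.
  by rewrite mulSnr addnA Ainv' IH.
have [a _ Hd] := Bezoutl K p0.
set g := gcdn p K in Hd.
have fg : forall t, f (t + g + a * K) = f t.
  by move=> t; case/dvdnP: Hd => c Hc; rewrite -addnA Hc fp.
have Ag : forall t, P (f (t + g)) = P (f t).
  by move=> t; rewrite -(AinvM a) fg.
have Ajg : forall j, P (f (j * g)).
  by elim=> [|j IH]; rewrite ?mul0n // mulSnr Ag.
have g0 : 0 < g by rewrite gcdn_gt0 p0.
have gK : g %| K by exact: dvdn_gcdr.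
have gp : g %| p by exact: dvdn_gcdl.
have gleK : g <= K by exact: dvdn_leq.
have beta : p - L < g.
  rewrite ltnNge; apply/negP => H.
  have E := divn_eq (L + g - 1) g.
  have R := ltn_pmod (L + g - 1) g0.
  have At := Ajg ((L + g - 1) %/ g).
  move: E At; set t := (L + g - 1) %/ g * g => E At.
  by have := PB t; rewrite At; lia.
set N := p %/ g.
have Np : N * g = p by rewrite divnK.
have N0 : 0 < N by case: N Np => //; lia.
have NK : forall t, f (t + N * K) = f t.
  move=> t; rewrite -[K in N * K](divnK gK) mulnCA Np; exact: fp.
exists g; first by apply/andP; split => //; lia.
split => // x.
set y := x + g.
pose c j := f (y + j * K).
pose bad j := L <= (y + j * K) %% p.
have cedge : forall j, j < N -> ~~ bad j -> c j.+1 = c j.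
  move=> j _ Hb; rewrite /c mulSnr addnA edge //; by rewrite ltnNge.
have ub : forall j1 j2, j1 < j2 -> j2 < N -> bad j1 -> bad j2 -> False.
  move=> j1 j2 H12 H2 B1 B2.
  set d := j2 - j1.
  have Ey : y + j2 * K = (y + j1 * K) + d * K.
    by rewrite -addnA -mulnDl /d subnKC // ltnW.
  move: B2; rewrite /bad Ey -modnDml => B2.
  move: B1; rewrite /bad => B1.
  set r1 := (y + j1 * K) %% p in B1 B2.
  have r1p : r1 < p by rewrite ltn_pmod.
  have M : (r1 + d * K) %% p %% g = r1 %% g.
    rewrite modn_dvdm // -[K in d * K](divnK gK) mulnA addnC modnMDl.
    by [].
  have r2p : (r1 + d * K) %% p < p by rewrite ltn_pmod.
  have E : (r1 + d * K) %% p = r1.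
    apply: mod_close M _ _.
      by apply: (leq_trans r2p); move: B1 beta; clear; lia.
    by apply: (leq_trans r1p); move: B2 beta; clear; lia.
  have Dv : p %| d * K.
    have : (r1 + d * K == r1 %[mod p]) by rewrite E modn_small.
    by rewrite eqn_mod_dvd ?leq_addr // addKn.
  have Dv2 : p %| d * g.
    by rewrite /g gcdnC muln_gcdr dvdn_gcd Dv dvdn_mull.
  have d0 : 0 < d * g by rewrite muln_gt0 g0 andbT /d; move: H12; clear; lia.
  have := dvdn_leq d0 Dv2; rewrite -Np leq_pmul2r // /d; move: H2; clear; lia.
have cN : c N = c 0 by rewrite /c NK mul0n addn0.
have Hc : forall j, j <= N -> c j = c 0.
  apply: cycle_const cedge _ cN => j1 j2 H1 H2 B1 B2.
  case: (ltngtP j1 j2) => // H; first by case: (ub _ _ H H2 B1 B2).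
  by case: (ub _ _ H H1 B2 B1).
have Ea : a * K = (a %% N) * K + (a %/ N * (K %/ g)) * p.
  rewrite {1}(divn_eq a N) mulnDl addnC; congr (_ + _).
  by rewrite -Np -mulnA -mulnA; congr (_ * _); rewrite mulnCA divnK.
have := fg x; rewrite -/y Ea addnA fp => <-.
have := Hc (a %% N) (ltnW (ltn_pmod _ N0)); rewrite /c => ->.
by rewrite mul0n addn0.
Qed.


Lemma axis (T : Type) (iv : T -> T) (f : nat -> T) p D :
  (forall x, iv (iv x) = x) -> (forall x, iv x <> x) -> D < p ->
  (forall r, r.+1 < p -> f r.+1 <> iv (f r)) ->
  (forall j, j <= D -> f j = iv (f (D - j))) -> False.
Proof.
move=> ivK ivn Dp adj rel.
have E := divn_eq D 2; have R := ltn_pmod D (isT : 0 < 2).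
set r := D %/ 2 in E R.
have Hr : f r = iv (f (D - r)) by apply: rel; move: E; clear; lia.
case: (D %% 2) E R => [|[|//]] E R.
  have E2 : D - r = r by move: E; clear; lia.
  by rewrite E2 in Hr; exact: (ivn _ (esym Hr)).
have E2 : D - r = r.+1 by move: E; clear; lia.
rewrite E2 in Hr; apply: (adj r); first by move: E Dp; clear; lia.
by rewrite Hr ivK.
Qed.

Lemma neg_core (T : Type) (P : T -> bool) (iv : T -> T) (f : nat -> T) p L D :
  (forall x, iv (iv x) = x) -> (forall x, iv x <> x) -> (forall x, P (iv x) = P x) ->
  0 < L -> L <= p -> D < p ->
  P (f 0) -> P (f L.-1) -> (forall r, L <= r -> r < p -> ~~ P (f r)) ->
  (forall r, r.+1 < p -> f r.+1 <> iv (f r)) ->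
  (forall j, j < L -> f j = iv (f (if j <= D then D - j else D + p - j))) -> False.
Proof.
move=> ivK ivn Piv L0 Lp Dp PA0 PAL PB adj rel.
set sig := fun j => if j <= D then D - j else D + p - j.
have sig1 : forall r, r <= D -> sig r = D - r by move=> r H; rewrite /sig H.
have rel' : forall j, j < L -> f j = iv (f (sig j)) by exact: rel.
have sig2 : forall r, D < r -> sig r = D + p - r.
  by move=> r H; rewrite /sig leqNgt H.
have siglt : forall r, r < p -> sig r < p.
  move=> r Hr; case: (leqP r D) => H; [rewrite sig1 | rewrite sig2] => //;
  move: H Hr Dp; clear; lia.
have sigK : forall r, r < p -> sig (sig r) = r.
  move=> r Hr; case: (leqP r D) => H.
    by rewrite sig1 // sig1; move: H; clear; lia.
  rewrite sig2 // sig2; move: H Hr Dp; clear; lia.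
have Ainv : forall r, r < p -> P (f (sig r)) = P (f r).
  apply: (count_shift (L := L) (s := sig) (a := fun r => P (f r))) => //.
  - move=> r1 r2 H1 H2 E; by rewrite -(sigK r1 H1) E sigK.
  - by move=> r Hr Ha; rewrite ltnNge; apply/negP => H; move: (PB r H Hr); rewrite Ha.
  - by move=> r Hr; rewrite (rel' r Hr) Piv.
case: (boolP (has (fun t => L <= sig t) (iota L (p - L)))) => [/hasP [t Ht Hu] | /hasPn Hn].
  rewrite mem_iota subnKC // in Ht.
  have key : forall r, L <= r -> r < p -> sig r = L.-1 -> False.
    move=> r H1 H2 E; move: (PB r H1 H2); rewrite -Ainv // E PAL //.
  have key0 : forall r, L <= r -> r < p -> sig r = 0 -> False.
    move=> r H1 H2 E; move: (PB r H1 H2); rewrite -Ainv // E PA0 //.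
  have DL : D = L.-1.
    case: (leqP t D) => Ht1.
      rewrite sig1 // in Hu.
      exfalso; apply: (key (D - L + 1)).
      - by move: Hu Ht1 Ht; clear; lia.
      - by move: Hu Ht1 Dp Ht L0; clear; lia.
      - by rewrite sig1; move: Hu Ht1 L0 Ht; clear; lia.
    rewrite sig2 // in Hu.
    case: (ltngtP D L.-1) => H //.
      exfalso; apply: (key (D + p - L + 1)).
      - by move: Hu Ht1 Ht H L0 Dp Lp; clear; lia.
      - by move: H L0 Ht; clear; lia.
      - by rewrite sig2; move: H Lp L0 Ht; clear; lia.
    exfalso; apply: (key0 D).
    - by move: H L0; clear; lia.
    - by [].
    - by rewrite sig1 // subnn.
  apply: (axis ivK ivn Dp adj) => j Hj.
  rewrite -sig1 //; apply: rel'; move: Hj DL L0; clear; lia.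
apply: (axis ivK ivn Dp adj) => j Hj.
rewrite -sig1 //.
case: (ltnP j L) => HjL; first exact: rel'.
have Hs : sig j < L.
  by rewrite ltnNge; apply: Hn; rewrite mem_iota subnKC //; move: Hj Dp HjL; clear; lia.
rewrite (rel' _ Hs) sigK ?ivK //; move: Hj Dp; clear; lia.
Qed.


Section FG2.
Variables A B : eqType.
Local Notation letter := (letter A B).
Local Notation word := (word A B).
Local Notation inv := (@inv_letter A B).
Local Notation cons_red := (@cons_red A B).
Local Notation fone := (@fone A B).
Local Notation finv := (@Defs.finv A B).

Lemma nth_adj (x0 : letter) (s : word) i : reduced s -> i.+1 < size s ->
  nth x0 s i.+1 != inv (nth x0 s i).
Proof.
elim: s i => [|x s IH] i // Hs Hi.
move: Hs; rewrite reduced_cons => /andP [J Hs].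
case: i Hi => [|i] Hi.
  by case: s Hs Hi J {IH}.
by rewrite /= IH.
Qed.

Lemma no_self_inv (x0 : letter) (y : word) : reduced y -> y != [::] -> y <> finv y.
Proof.
move=> Hr Hy E.
apply: (@axis _ inv (fun j => nth x0 y j) (size y) (size y).-1).
- exact: invK.
- by move=> x /eqP; rewrite (negbTE (inv_neq x)).
- by case: y Hy {Hr E}.
- by move=> r Hr' /eqP; rewrite (negbTE (nth_adj x0 Hr Hr')).
- move=> j Hj; rewrite {1}E nth_finv; last by case: y Hy {Hr E} Hj => // a y _ /=; lia.
  by congr (inv (nth _ _ _)); lia.
Qed.

Lemma decomp (w : word) : reduced w -> w != [::] ->
  exists u y, [/\ w = u ++ y ++ finv u, y != [::] & reduced (y ++ y)].
Proof.
move: {2}(size w) (leqnn (size w)) => n; elim: n w => [|n IH] w.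
  by case: w.
case: w => [|x w] // Hs Hr _.
case/lastP: w Hs Hr => [|v x'] Hs Hr.
  exists [::], [:: x]; split => //=; by rewrite andbT eq_sym inv_neq.
case: (eqVneq x' (inv x)) => [Ex|Ex].
  have Hv : v != [::].
    by apply/negP => /eqP Ev; move: Hr; rewrite Ev Ex /= eqxx.
  have Hrv : reduced v.
    by move: Hr; rewrite -cats1 -cat_cons => /reduced_catl; rewrite reduced_cons => /andP [].
  have Hsv : size v <= n by move: Hs; rewrite /= size_rcons; lia.
  have [u [y [Ev Hy Hyy]]] := IH v Hsv Hrv Hv.
  exists (x :: u), y; split => //.
  by rewrite Ev finv_cons Ex -cats1 !catA.
exists [::], (x :: rcons v x'); split => //.
  by rewrite /= cats0.
rewrite reduced_cat Hr /= -cats1 last_cat /=.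
by rewrite eq_sym -(inj_eq (@linv_inj A B)) invK Ex.
Qed.

Lemma fpow_cyc (y : word) n : y != [::] -> reduced (y ++ y) ->
  fpow y (Posz n) = ycat n y /\ fpow y (Negz n) = ycat n.+1 (finv y).
Proof.
move=> Hy Hyy.
have F0 : finv [::] = [::] by [].
have Hr : reduced y by exact: reduced_catl Hyy.
split.
  case: n => [|n] //.
  have H := @fpow_conj A B [::] y n Hy; rewrite F0 /= !cats0 in H.
  exact: H.
have Hy' : finv y != [::] by rewrite finv_nil.
have H := @fpow_conj A B [::] (finv y) n Hy'; rewrite F0 /= !cats0 in H.
apply: H; first by rewrite reduced_finv.
by rewrite -finv_cat reduced_finv.
Qed.


Lemma nasty (x0 : letter) (u y Y g h : word) n :
  u != [::] -> y != [::] -> reduced (u ++ y ++ finv u) ->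
  (Y = y \/ Y = finv y) ->
  u ++ ycat n.+1 Y ++ finv u = g ++ (u ++ y ++ finv u) ++ h ->
  [/\ Y = y, n = 0 & g = [::]].
Proof.
move=> Hu Hy Hz HY EW.
set z := u ++ y ++ finv u in Hz EW.
set W := u ++ ycat n.+1 Y ++ finv u in EW.
set m := size u; set q := size y; set k := size g.
have m0 : 0 < m by rewrite lt0n size_eq0.
have q0 : 0 < q by rewrite lt0n size_eq0.
have qY : size Y = q by case: HY => ->; rewrite ?size_finv.
have sz : size z = m + q + m by rewrite /z !size_cat size_finv addnA.
have sW : size W = m + n.+1 * q + m by rewrite /W !size_cat size_finv size_ycat qY addnA.
have Hk : k + q <= n.+1 * q.
  move: (congr1 size EW); rewrite sW (size_cat g) (size_cat z h) sz -/k; lia.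
have W2 : forall t, t < n.+1 * q -> nth x0 W (m + t) = nth x0 Y (t %% q).
  move=> t Ht; rewrite /W nth_cat ltnNge leq_addr /= addKn nth_cat size_ycat qY Ht.
  by rewrite nth_ycat qY.
have WZ : forall j, j < size z -> nth x0 W (k + j) = nth x0 z j.
  by move=> j Hj; rewrite EW nth_cat ltnNge leq_addr /= addKn nth_cat Hj.
have z1 : nth x0 z m.-1 = nth x0 u m.-1.
  by rewrite /z nth_cat prednK // leqnn.
have z2 : forall j, j < q -> nth x0 z (m + j) = nth x0 y j.
  by move=> j Hj; rewrite /z nth_cat ltnNge leq_addr /= addKn nth_cat Hj.
have z3 : nth x0 z (m + q) = inv (nth x0 u m.-1).
  rewrite /z nth_cat ltnNge leq_addr /= addKn nth_cat ltnn subnn nth_finv //.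
  by rewrite subn1.
have adj := nth_adj x0 Hz.
have k0 : k = 0.
  case: (posnP k) => // kp; exfalso.
  have A1 : nth x0 W (k + m.-1) = nth x0 u m.-1 by rewrite WZ ?z1 // sz; lia.
  have A1' : nth x0 W (k + m.-1) = nth x0 Y (k.-1 %% q).
    by rewrite -W2; [congr nth; lia | lia].
  have A2 : nth x0 W (k + (m + q.-1)) = nth x0 y q.-1.
    by rewrite WZ ?z2 //; [lia | rewrite sz; lia].
  have A2' : nth x0 W (k + (m + q.-1)) = nth x0 Y (k.-1 %% q).
    rewrite -(modnDr (k.-1) q) -W2; [congr nth; lia | lia].
  have := adj (m + q.-1) (_ : _ < _); rewrite sz => /(_ (ltac:(lia))).
  have -> : (m + q.-1).+1 = m + q by lia.
  by rewrite z3 z2 ?prednK // -A2 A2' -A1' A1 eqxx.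
have g0 : g = [::] by apply/eqP; rewrite -size_eq0 -/k k0.
have Yy : Y = y.
  case: HY => // Ef; exfalso.
  have Hry : reduced y by move: Hz => /reduced_catr /reduced_catl.
  apply: (no_self_inv x0 Hry Hy).
  apply: (@eq_from_nth _ x0); first by rewrite size_finv.
  move=> j Hj; rewrite -Ef -(modn_small Hj) -W2; last by rewrite mulSn; lia.
  rewrite -(add0n (m + j)) -k0 WZ; first by rewrite z2 // modn_small.
  by rewrite sz; move: Hj; clear; lia.
split => //.
case: (posnP n) => // npos; exfalso.
have nq : q <= n * q by rewrite leq_pmull.
have E : nth x0 W (m + q) = nth x0 Y 0.
  by rewrite W2 ?modnn // mulSn; move: nq q0; clear; lia.
have E2 : nth x0 W (m + q) = inv (nth x0 u m.-1).
  rewrite -(add0n (m + q)) -k0 WZ ?z3 // sz; move: m0; clear; lia.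
have := adj m.-1; rewrite sz prednK // => /(_ (ltac:(move: q0; clear; lia))).
have z2' := z2 0 q0; rewrite addn0 in z2'.
by rewrite z2' z1 -E2 E Yy eqxx.
Qed.

End FG2.


Section FG3.
Variables A B : eqType.
Local Notation letter := (letter A B).
Local Notation word := (word A B).
Local Notation inv := (@inv_letter A B).
Local Notation cons_red := (@cons_red A B).
Local Notation fone := (@fone A B).
Local Notation finv := (@Defs.finv A B).
Local Notation isA := (@isA A B).
Local Notation isB := (@isB A B).

Lemma all_reduce (P : letter -> bool) (u : word) :
  (forall x, P (inv x) = P x) -> all P u -> all P (reduce u).
Proof.
move=> Pinv; elim: u => [|x u IH] //= /andP [Px Hu].
have := IH Hu; rewrite /reduce /=; case: (foldr _ _ _) => [|y v] /=.
  by rewrite Px.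
move=> /andP [Py Hv]; rewrite /Defs.cons_red.
by case: ifP => _ /=; rewrite ?Px ?Py ?Hv.
Qed.

Lemma proper_of_period (x0 : letter) (w : word) g :
  reduced w -> 0 < g -> g < size w -> g %| size w ->
  (forall x, nth x0 w ((x + g) %% size w) = nth x0 w (x %% size w)) ->
  proper_power w.
Proof.
move=> Hw g0 gp gdv per.
set p := size w in gp gdv per.
set f := fun t => nth x0 w (t %% p).
have fM : forall x c, f (x + c * g) = f x.
  move=> x; elim=> [|c IH]; first by rewrite mul0n addn0.
  by rewrite mulSnr addnA /f per.
have fmod : forall t, f t = f (t %% g).
  by move=> t; rewrite {1}(divn_eq t g) addnC fM.
set N := p %/ g.
have Np : N * g = p by rewrite divnK.
set u := take g w.
have su : size u = g by rewrite size_takel // ltnW.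
have Ew : w = ycat N u.
  apply: (@eq_from_nth _ x0); first by rewrite size_ycat su Np.
  move=> t Ht; rewrite nth_ycat; last by rewrite su Np.
  rewrite su nth_take ?ltn_pmod //.
  have := fmod t; rewrite /f (modn_small Ht) (modn_small (ltn_trans (ltn_pmod t g0) gp)) //.
have N2 : 2 <= N.
  rewrite ltnNge; apply/negP => H.
  by have := leq_mul H (leqnn g); rewrite Np mul1n leqNgt gp.
have Hu : reduced u by rewrite /u; move: Hw; rewrite -{1}(cat_take_drop g w) => /reduced_catl.
have Huu : reduced (u ++ u).
  move: Hw; rewrite Ew -(subnKC N2) ycat_add /ycat /= cats0 => /reduced_catl.
  by [].
have u0 : u != [::] by rewrite -size_eq0 su -lt0n.
exists u, N; split => //; split => //.
by rewrite (fpow_cyc N u0 Huu).1.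
Qed.


Lemma main_helper (b z : word) :
  reduced b -> in_gen_B b ->
  reduced z -> begins_in_A z -> ends_in_A z ->
  ~ proper_power (fmul z b) ->
  forall (i : int) (g h : word),
    reduced (g ++ z ++ h) ->
    fpow (fmul z b) i = g ++ z ++ h ->
    exists n, [/\ i = Posz n, 0 < n & in_cyclic (fmul z b) g].
Proof.
move=> Hb [bb [Hbb Ebb]] Hz Hbeg Hend Hnpp i g h Hgzh EW.
have allB : all isB b by rewrite -Ebb; apply: all_reduce.
case Ez: z Hbeg => [|x0 zz] // HA0; rewrite -Ez.
have L0 : 0 < size z by rewrite Ez.
have HA0' : isA (nth x0 z 0) by rewrite Ez.
have HAL : isA (nth x0 z (size z).-1).
  move: Hend; rewrite /ends_in_A; case E: (rev z) => [|x r] // Hx.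
  have : nth x0 (rev z) 0 = x by rewrite E.
  by rewrite nth_rev // subn1 => ->.
have jzb : jn z b.
  case: b Hb Ebb allB {Hnpp EW} => [|y b'] _ _ /=; first by rewrite Ez.
  move=> /andP [By _].
  rewrite Ez /=.
  have -> : last x0 zz = nth x0 z (size z).-1 by rewrite nth_last Ez.
  apply/eqP => E; move: HAL; rewrite -[nth _ _ _]invK -E isA_inv isA_isB By.
  by [].
set w := z ++ b.
have Hw : reduced w by rewrite /w reduced_cat Hz Hb jzb.
have Ew : fmul z b = w by rewrite /fmul reduce_id.
rewrite Ew in Hnpp EW *.
set L := size z in L0 HA0' HAL.
set p := size w.
have Lp : L <= p by rewrite /p /w size_cat leq_addr.
have wz : forall j, j < L -> nth x0 w j = nth x0 z j by move=> j Hj; rewrite /w nth_cat Hj.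
have wB : forall r, L <= r -> r < p -> ~~ isA (nth x0 w r).
  move=> r H1 H2; rewrite /w nth_cat ltnNge H1 /= isA_isB negbK.
  have : nth x0 b (r - L) \in b.
    by apply: mem_nth; move: H2 H1; rewrite /p /w size_cat -/L; clear; lia.
  by move/(allP allB).
set k := size g.
have Hw0 : w != [::] by rewrite -size_eq0 -/p; lia.
have szW : size (g ++ z ++ h) = k + L + size h by rewrite !size_cat addnA.
have WZ : forall j, j < L -> nth x0 (g ++ z ++ h) (k + j) = nth x0 z j.
  by move=> j Hj; rewrite nth_cat ltnNge leq_addr /= addKn nth_cat Hj.
case: (boolP (reduced (w ++ w))) => Hcyc.
  case: i EW => n EW.
    rewrite (fpow_cyc n Hw0 Hcyc).1 in EW.
    have szn : n * p = k + L + size h by rewrite -szW -EW size_ycat.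
    have n0 : 0 < n by case: n szn {EW}; rewrite ?mul0n; move: L0; clear; lia.
    exists n; split => //.
    have p0 : 0 < p by move: L0 Lp; clear; lia.
    have kLn : k + L <= n * p by rewrite szn leq_addr.
    have Wn : forall t, t < n * p -> nth x0 (ycat n w) t = nth x0 w (t %% p).
      by move=> t Ht; rewrite nth_ycat.
    case: (posnP (k %% p)) => K0.
      exists (Posz (k %/ p)); rewrite (fpow_cyc (k %/ p) Hw0 Hcyc).1.
      have kE : k = k %/ p * p by rewrite {1}(divn_eq k p) K0 addn0.
      have kn : k %/ p <= n.
        by rewrite -(leq_pmul2r p0) -kE; move: kLn; clear; lia.
      have : take k (ycat n w) = g by rewrite EW take_size_cat.
      rewrite -(subnKC kn) ycat_add {1}kE.
      by rewrite take_size_cat // size_ycat.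
    exfalso; apply: Hnpp.
    have [g' /andP [g0 gp] [gdv per]] :=
      @pos_core _ isA (fun t => nth x0 w (t %% p)) p L (k %% p) L0 Lp K0 (ltn_pmod k p0)
        (fun t => ltac:(by rewrite /= modn_mod))
        (ltac:(by rewrite /= mod0n wz))
        (fun r H1 H2 => ltac:(by rewrite /= modn_small //; exact: wB))
        (fun j Hj => ltac:(by rewrite /= addnC modnDml -Wn ?EW ?WZ ?wz ?modn_small //;
                        move: Hj kLn Lp; clear; lia)).
    exact: (proper_of_period (x0 := x0) Hw g0 gp gdv per).
  rewrite (fpow_cyc n Hw0 Hcyc).2 in EW.
  exfalso.
  have p0 : 0 < p by move: L0 Lp; clear; lia.
  have szn : n.+1 * p = k + L + size h by rewrite -szW -EW size_ycat size_finv.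
  have kLn : k + L <= n.+1 * p by rewrite szn leq_addr.
  have Kp : k %% p < p by rewrite ltn_pmod.
  set K := k %% p in Kp.
  apply: (@neg_core _ isA inv (fun t => nth x0 w t) p L (p.-1 - K)).
  - exact: invK.
  - by move=> x E; move: (inv_neq x); rewrite E eqxx.
  - exact: isA_inv.
  - exact: L0.
  - exact: Lp.
  - by move: p0; clear; lia.
  - by rewrite /= wz.
  - by rewrite /= wz //; move: L0; clear; lia.
  - exact: wB.
  - by move=> r Hr /eqP; rewrite (negbTE (nth_adj x0 Hw Hr)).
  move=> j Hj /=.
  rewrite wz // -(WZ _ Hj) -EW nth_ycat ?size_finv; last by move: Hj kLn; clear; lia.
  rewrite nth_finv ?ltn_pmod // -/p -modnDml -/K.
  congr (inv (nth _ _ _)).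
  case: leqP => HjD.
    rewrite modn_small; first by move: HjD p0; clear; lia.
    by move: HjD p0 Kp; clear; lia.
  have E : K + j = (K + j - p) + p by move: HjD p0 Kp; clear; lia.
  rewrite E modnDr modn_small; first by move: HjD p0 Kp Hj Lp; clear; lia.
  by move: Hj Lp Kp; clear; lia.
have b0 : b = [::].
  case Eb: b => [|y b'] //; exfalso; move: Hcyc.
  rewrite reduced_cat Hw /= /w Ez Eb /= last_cat /=.
  rewrite Eb in allB.
  have : isB (last y b') by apply: (allP allB); exact: mem_last.
  move=> HB; apply/negP; rewrite negbK; apply/eqP => E.
  by move: HA0; rewrite E /= isA_inv isA_isB HB.
have wz' : w = z by rewrite /w b0 cats0.
rewrite wz' in Hnpp EW Hcyc Hw *.
have Hz0 : z != [::] by rewrite Ez.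
have [u [y [Ezu Hy Hyy]]] := decomp Hz Hz0.
have Hu : u != [::].
  by apply/negP => /eqP u0; move: Hcyc; rewrite Ezu u0 /= cats0 Hyy.
have Hr : reduced (u ++ y ++ finv u) by rewrite -Ezu.
have Hry : reduced y by move: Hr => /reduced_catr /reduced_catl.
case: i EW => n EW.
  case: n EW => [|m] EW.
    by move: (congr1 size EW); rewrite /fpow /= !size_cat -/L; move: L0; clear; lia.
  rewrite Ezu in EW.
  rewrite /fpow (fpow_conj m Hy Hr Hyy) in EW.
  have [_ m0 g0] := nasty x0 Hu Hy Hr (or_introl erefl) EW.
  exists 1; split => //; first by rewrite m0.
  by exists (Posz 0); rewrite g0.
rewrite Ezu in EW.
have Fz : finv (u ++ y ++ finv u) = u ++ finv y ++ finv u.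
  by rewrite !finv_cat finvK catA.
have Hy' : finv y != [::] by rewrite finv_nil.
have Hr' : reduced (u ++ finv y ++ finv u) by rewrite -Fz reduced_finv.
have Hyy' : reduced (finv y ++ finv y) by rewrite -finv_cat reduced_finv.
rewrite /fpow Fz (fpow_conj n Hy' Hr' Hyy') in EW.
have [E _ _] := nasty x0 Hu Hy Hr (or_intror erefl) EW.
by case: (no_self_inv x0 Hry Hy (esym E)).
Qed.

End FG3.


Local Open Scope ring_scope.

Theorem lemma2p2 (A B : eqType) (b z : word A B) :
  reduced b -> in_gen_B b ->
  reduced z -> begins_in_A z -> ends_in_A z ->
  ~ proper_power (fmul z b) ->
  forall (i : int) (g h : word A B),
    reduced g -> reduced h ->
    reduced (g ++ z ++ h) ->
    fpow (fmul z b) i = g ++ z ++ h ->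
    1 <= i /\ in_cyclic (fmul z b) g.
Proof.
move=> Hb HbB Hz Hbeg Hend Hnpp i g h _ _ Hgzh EW.
have [n [-> n0 Hc]] := main_helper Hb HbB Hz Hbeg Hend Hnpp Hgzh EW.
by split => //; rewrite lez_nat.
Qed.
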